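(* Let $r\in\mathbb{Z}$, $s\in\mathbb{N}$ be coprime with $|r|<s$, let $\theta=\arccos(r/s)$, and let $k\in\mathbb{N}$ be squarefree. Let $E$ be the elliptic curve $y^2=x\bigl(x-(s-r)k\bigr)\bigl(x+(s+r)k\bigr)$ over $\mathbb{Q}$ associated with $(r,s,k)$. (i) If $k$ is odd and $E(\mathbb{Q})$ has a point of order $4$ or $8$, then $k=1$. (ii) If $k$ is even and $E(\mathbb{Q})$ has a point of order $4$ or $8$, then $k=2$. (iii) If $k$ is odd and $E(\mathbb{Q})$ has a point of order $3$ or $6$, then $k\in\{1,3\}$. (iv) If $k$ is even and $E(\mathbb{Q})$ has a point of order $3$ or $6$, then $k\in\{2,6\}$.
   Context: Given $\theta\in(0,\pi)$ with $\cos\theta=r/s$ in lowest terms, $k\in\mathbb{N}$ is $\theta$-congruent if there is a triangle with rational sides having angle $\theta$ and area $k\sqrt{s^2-r^2}$; this holds iff $E(\mathbb{Q})$ has a point of order $>2$, and $k$ is said to be $\theta$-congruent due to $N$-torsion when $E(\mathbb{Q})$ has a point of order $N$ (which then yields such a triangle). *)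

(* Defs.v *)
From HB Require Import structures.
From mathcomp Require Import all_boot all_order all_algebra.
Set Implicit Arguments. Unset Strict Implicit. Unset Printing Implicit Defensive.
Import Order.TTheory GRing.Theory Num.Theory.
Local Open Scope ring_scope.

Definition squarefree (k : nat) : Prop :=
  (0 < k)%N /\ forall p : nat, prime p -> ~~ (p * p %| k)%N.

(* Points of the projective curve: None = point at infinity O. *)
Definition ecpt := option (rat * rat).

Record wcurve := WCurve { wa : rat; wb : rat; wc : rat }.

Definition on_curve (E : wcurve) (P : ecpt) : bool :=
  match P with
  | None => true
  | Some (x, y) => y ^+ 2 == x ^+ 3 + wa E * x ^+ 2 + wb E * x + wc E
  end.

Definition ec_add (E : wcurve) (P Q : ecpt) : ecpt :=
  match P, Q with
  | None, _ => Q
  | _, None => P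
  | Some (x1, y1), Some (x2, y2) =>
      if (x1 == x2) && (y1 == - y2) then None
      else
        let l := if x1 == x2
                 then (3%:R * x1 ^+ 2 + 2%:R * wa E * x1 + wb E) / (2%:R * y1)
                 else (y2 - y1) / (x2 - x1) in
        let x3 := l ^+ 2 - wa E - x1 - x2 in
        Some (x3, l * (x1 - x3) - y1)
  end.

Fixpoint ec_mul (E : wcurve) (n : nat) (P : ecpt) : ecpt :=
  match n with
  | O => None
  | S m => ec_add E P (ec_mul E m P)
  end.

Definition has_order (E : wcurve) (N : nat) (P : ecpt) : Prop :=
  on_curve E P /\ (0 < N)%N /\ ec_mul E N P = None /\
  forall m : nat, (0 < m)%N -> (m < N)%N -> ec_mul E m P <> None.

Definition has_point_of_order (E : wcurve) (N : nat) : Prop :=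
  exists P : ecpt, has_order E N P.

(* The curve y^2 = x (x - (s-r)k) (x + (s+r)k) expanded:
   x^3 + 2rk x^2 - (s-r)(s+r)k^2 x. *)
Definition theta_curve (r : int) (s k : nat) : wcurve :=
  let R := (r%:~R : rat) in let S := (s%:R : rat) in let K := (k%:R : rat) in
  WCurve ((S + R) * K - (S - R) * K) (- ((S - R) * K) * ((S + R) * K)) 0.

(* Main.v *)
Require Import Defs.
From HB Require Import structures.
From mathcomp Require Import all_boot all_order all_algebra.
From mathcomp Require Import ring lra zify.
Import Order.TTheory GRing.Theory Num.Theory.
Set Implicit Arguments. Unset Strict Implicit. Unset Printing Implicit Defensive.
Local Open Scope ring_scope.


Definition cub (E : wcurve) (x : rat) := x ^+ 3 + wa E * x ^+ 2 + wb E * x + wc E.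
Definition cubd (E : wcurve) (x : rat) := 3%:R * x ^+ 2 + 2%:R * wa E * x + wb E.

Definition neg (P : ecpt) : ecpt :=
  match P with None => None | Some (x, y) => Some (x, - y) end.

Lemma negK P : neg (neg P) = P.
Proof. by case: P => [[x y]|] //=; rewrite opprK. Qed.

Lemma on_curveE E x y : on_curve E (Some (x, y)) = (y ^+ 2 == cub E x).
Proof. by []. Qed.

Lemma on_curve_neg E P : on_curve E P -> on_curve E (neg P).
Proof. by case: P => [[x y]|] //=; rewrite sqrrN. Qed.

Lemma KL E x1 y1 x2 y2 x3 y3 :
  on_curve E (Some (x1, y1)) -> on_curve E (Some (x2, y2)) ->
  ec_add E (Some (x1, y1)) (Some (x2, y2)) = Some (x3, y3) ->
  exists l, [/\ y3 = l * (x1 - x3) - y1, y2 = y1 + l * (x2 - x1),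
     x3 = l ^+ 2 - wa E - x1 - x2 &
     forall z, cub E z - (l * (z - x1) + y1) ^+ 2 = (z - x1) * (z - x2) * (z - x3)].
Proof.
rewrite !on_curveE => /eqP h1 /eqP h2 /=.
case: (eqVneq x1 x2) => [e|nx] /=.
  subst x2.
  case: (eqVneq y1 (- y2)) => [//|ny] /= [<- <-].
  have yy : y1 = y2.
    have : (y1 - y2) * (y1 + y2) = 0 by rewrite -subr_sqr h1 h2 subrr.
    move/eqP; rewrite mulf_eq0 => /orP[/eqP|/eqP]; first by move/subr0_eq.
    by move/eqP; rewrite addr_eq0 (negbTE ny).
  subst y2.
  have y0 : y1 != 0 by apply: contra ny => /eqP ->; rewrite oppr0.
  have h2y : 2%:R * y1 != 0 by rewrite mulf_neq0 // pnatr_eq0.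
  set l := (_ / _).
  have hl : 2%:R * l * y1 = cubd E x1 by rewrite /l /cubd; field.
  exists l; split => //; first by rewrite subrr mulr0 addr0.
  move=> z; apply/eqP; rewrite -subr_eq0; apply/eqP.
  have -> : cub E z - (l * (z - x1) + y1) ^+ 2 -
     (z - x1) * (z - x1) * (z - (l ^+ 2 - wa E - x1 - x1)) =
     (cub E x1 - y1 ^+ 2) + (z - x1) * (cubd E x1 - 2%:R * l * y1)
    by rewrite /cub /cubd; ring.
  by rewrite h1 hl !subrr mulr0 addr0.
set l := (_ / _).
have hl : y2 = y1 + l * (x2 - x1).
  by rewrite /l; field; rewrite subr_eq0 eq_sym.

move=> [<- <-]; exists l; split => //.
move=> z; apply/eqP; rewrite -subr_eq0; apply/eqP.
have hx : x1 - x2 != 0 by rewrite subr_eq0.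
apply: (mulfI hx); rewrite mulr0.
have -> : (x1 - x2) * (cub E z - (l * (z - x1) + y1) ^+ 2 -
     (z - x1) * (z - x2) * (z - (l ^+ 2 - wa E - x1 - x2))) =
     (z - x2) * (cub E x1 - y1 ^+ 2) - (z - x1) * (cub E x2 - (l * (x2 - x1) + y1) ^+ 2)
  by rewrite /cub; ring.
by rewrite h1 subrr mulr0 (addrC (l * _)) -hl h2 subrr mulr0 subrr.
Qed.

Lemma add_on_curve E P Q : on_curve E P -> on_curve E Q -> on_curve E (ec_add E P Q).
Proof.
case: P => [[x1 y1]|] //; case: Q => [[x2 y2]|] // h1 h2.
case h: ec_add => [[x3 y3]|] //.
have [l [e3 _ _ hF]] := KL h1 h2 h.
rewrite on_curveE; apply/eqP.
have := hF x3; rewrite !subrr mulr0 => /eqP; rewrite subr_eq0 => /eqP ->.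
by rewrite e3; ring.
Qed.

Lemma prod_sq E x1 y1 x2 y2 x3 y3 e :
  on_curve E (Some (x1, y1)) -> on_curve E (Some (x2, y2)) ->
  ec_add E (Some (x1, y1)) (Some (x2, y2)) = Some (x3, y3) -> cub E e = 0 ->
  exists t, (x1 - e) * (x2 - e) * (x3 - e) = t ^+ 2.
Proof.
move=> h1 h2 h ce.
have [l [e3 _ _ hF]] := KL h1 h2 h.
exists (l * (e - x1) + y1).
have := hF e; rewrite ce sub0r => H.
have -> : (x1 - e) * (x2 - e) * (x3 - e) = - ((e - x1) * (e - x2) * (e - x3)) by ring.
by rewrite -H opprK.
Qed.

Lemma tangent_slope E x1 y1 x2 l :
  y1 ^+ 2 = cub E x1 -> x1 = l ^+ 2 - wa E - x1 - x2 ->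
  cub E (x1 + 1) - (l * (x1 + 1 - x1) + y1) ^+ 2 = (x1 + 1 - x1) * (x1 + 1 - x2) * (x1 + 1 - x1) ->
  2%:R * l * y1 = cubd E x1.
Proof.
move=> h1 hx hF; apply/eqP; rewrite eq_sym -subr_eq0; apply/eqP.
have -> : cubd E x1 - 2%:R * l * y1 =
  (cub E (x1 + 1) - (l * (x1 + 1 - x1) + y1) ^+ 2 - (x1 + 1 - x1) * (x1 + 1 - x2) * (x1 + 1 - x1))
  - (cub E x1 - y1 ^+ 2) + (l ^+ 2 - wa E - x1 - x2 - x1) by rewrite /cub /cubd; ring.
by rewrite hF h1 -hx !subrr.
Qed.

Lemma SL E P Q : (forall x, cub E x = 0 -> cubd E x != 0) ->
  on_curve E P -> on_curve E Q -> ec_add E P (neg (ec_add E P Q)) = neg Q.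
Proof.
move=> ns; case: P => [[x1 y1]|] //; case: Q => [[x2 y2]|]; last first.
  by move=> _ _ /=; rewrite eqxx opprK eqxx.
move=> h1 h2.
case h: (ec_add E (Some (x1, y1)) (Some (x2, y2))) => [[x3 y3]|]; last first.
  have /andP[/eqP ex /eqP ey] : (x1 == x2) && (y1 == - y2).
    by move: h => /=; case: ifP.
  by rewrite /= ex ey.
have [l [e3 e2 ex3 hF]] := KL h1 h2 h.
have h1' := h1; rewrite on_curveE in h1'; move/eqP: h1' => h1'.
rewrite /= opprK.
case: (eqVneq x1 x3) => [ex|nx].
  rewrite -ex in e3 ex3 hF h *.
  have ts := tangent_slope h1' ex3 (hF (x1 + 1)).
  have ey : y3 = - y1 by rewrite e3 subrr mulr0 sub0r.
  rewrite /= ey.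
  case: (eqVneq y1 (- y1)) => [yy|ny].
    have y0 : y1 = 0.
      have : y1 *+ 2 == 0 by rewrite mulr2n {1}yy addNr.
      by rewrite mulrn_eq0 => /eqP.
    exfalso; move: (ns x1); rewrite -h1' y0 expr0n /= => /(_ erefl).
    by rewrite -ts y0 mulr0 eqxx.
  have y1n : y1 != 0 by apply: contra ny => /eqP ->; rewrite oppr0.
  have hl : (3%:R * x1 ^+ 2 + 2%:R * wa E * x1 + wb E) / (2%:R * y1) = l.
    by rewrite -[_ + wb E]/(cubd E x1) -ts; field.
  rewrite hl.
  have -> : l ^+ 2 - wa E - x1 - x1 = x2.
    by apply/eqP; rewrite -subr_eq0; apply/eqP; rewrite {2}ex3; ring.
  by rewrite e2; congr Some; congr pair; ring.
rewrite /=.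
have hl : (- y3 - y1) / (x3 - x1) = l.
  by rewrite e3; field; rewrite subr_eq0 eq_sym.
rewrite hl.
have -> : l ^+ 2 - wa E - x1 - x3 = x2.
  by rewrite ex3; ring.
by rewrite e2; congr Some; congr pair; ring.
Qed.

Lemma mul_on_curve E n P : on_curve E P -> on_curve E (ec_mul E n P).
Proof. by move=> hP; elim: n => [|n IH] //=; apply: add_on_curve. Qed.

Lemma mul_shift E P i j m : ec_mul E i P = ec_mul E j P ->
  ec_mul E (i + m) P = ec_mul E (j + m) P.
Proof. by move=> h; elim: m => [|m IH]; rewrite ?addn0 // !addnS /= IH. Qed.

Lemma reflect_mul E P n : (forall x, cub E x = 0 -> cubd E x != 0) ->
  on_curve E P -> ec_mul E n P = None ->
  forall j, (j <= n)%N -> ec_mul E (n - j) P = neg (ec_mul E j P).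
Proof.
move=> ns hP hn; elim=> [_|j IH hj]; first by rewrite subn0 hn.
have IH' := IH (ltnW hj).
have e : (n - j = (n - j.+1).+1)%N by rewrite subnSK.
rewrite e /= in IH'.
have := SL ns hP (mul_on_curve (n - j.+1) hP).
rewrite IH' negK /= => ->; by rewrite negK.
Qed.

Lemma distinct_mul E P n i k : has_order E n P -> (0 < i)%N -> (i < k)%N -> (k < n)%N ->
  ec_mul E i P <> ec_mul E k P.
Proof.
move=> [hP [n0 [hn hm]]] i0 ik kn h.
have := mul_shift (n - k) h; rewrite subnKC ?(ltnW kn) // hn.
apply: hm; first by rewrite addn_gt0 i0.
lia.
Qed.

Lemma not2tors E P n j : (forall x, cub E x = 0 -> cubd E x != 0) ->
  has_order E n P -> (0 < j)%N -> (j < n)%N -> (j + j != n)%N ->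
  ec_mul E j P <> neg (ec_mul E j P).
Proof.
move=> ns ho j0 jn jj h.
have [hP [n0 [hn hm]]] := ho.
have := reflect_mul ns hP hn (ltnW jn); rewrite -h => h2.
case: (ltngtP j (n - j)) => c.
- by apply: (distinct_mul ho j0 c); rewrite ?ltn_subrL ?j0 ?n0.
- by apply: (distinct_mul ho _ c jn); rewrite ?subn_gt0.
- by move: jj; rewrite {2}c subnKC ?(ltnW jn) ?eqxx.
Qed.

Definition xof (P : ecpt) := match P with Some (x, _) => x | None => 0 end.

Lemma chain E P e : on_curve E P -> cub E e = 0 -> forall j,
  (forall i, (0 < i <= j.+1)%N -> ec_mul E i P != None) ->
  (forall i, (0 < i < j.+1)%N -> xof (ec_mul E i P) != e) ->
  exists t, (xof (ec_mul E j.+1 P) - e) * (xof P - e) ^+ j.+1 = t ^+ 2.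
Proof.
move=> hP ce; elim=> [|j IH] hs hx.
  have : ec_mul E 1 P != None by apply: hs.
  by case: P {hP hs hx} => [[x y]|] //= _; exists (x - e); rewrite expr1 -expr2.
have [t ht] := IH (fun i hi => hs i ltac:(lia)) (fun i hi => hx i ltac:(lia)).
have hxj := hx j.+1 ltac:(lia).
have := hs 1%N isT; have := hs j.+1 ltac:(lia); have := hs j.+2 ltac:(lia).
have hPj := mul_on_curve j.+1 hP.
have ek : ec_mul E j.+2 P = ec_add E P (ec_mul E j.+1 P) by [].
move: ht hxj hPj ek.
case: (ec_mul E j.+2 P) => [[xk yk]|] //; case: (ec_mul E j.+1 P) => [[xj yj]|] //.
case: P hP {IH hs hx} => [[x1 y1]|] // hP /= ht hxj hPj ek _ _ _.
have [u hu] := prod_sq hP hPj (esym ek) ce.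
exists (u * t / (xj - e)).
rewrite expr_div_n exprMn -hu -ht exprS.
field; by rewrite subr_eq0.
Qed.


Definition nonsing E := forall x, cub E x = 0 -> cubd E x != 0.

Lemma root_not_x E P i e : nonsing E -> forall n, has_order E n P -> (0 < i)%N -> (i < n)%N ->
  (i + i != n)%N -> cub E e = 0 -> xof (ec_mul E i P) != e.
Proof.
move=> ns n ho i0 iN ii ce.
have [hP [n0 [hn hm]]] := ho.
have := hm i i0 iN; have hPi := mul_on_curve i hP.
have nt := not2tors ns ho i0 iN ii.
move: hPi nt; case: (ec_mul E i P) => [[xi yi]|] // hPi nt _ /=.
apply/eqP => xe; apply: nt.
move: hPi; rewrite on_curveE xe ce => /eqP /eqP; rewrite expf_eq0 /= => /eqP ->.
by rewrite /= oppr0.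
Qed.

Lemma partA E P m : nonsing E -> has_order E (m + m) P -> (0 < m)%N -> ~~ odd m ->
  exists x, ec_mul E m P = Some (x, 0) /\ forall e, cub E e = 0 -> exists t, x - e = t ^+ 2.
Proof.
move=> ns ho m0 ev.
have [hP [n0 [hn hm]]] := ho.
have hr := reflect_mul ns hP hn (leq_addr m m); rewrite addnK in hr.
have nn : ec_mul E m P <> None by apply: hm => //; lia.
have m2 : (1 < m)%N by move: m0 ev; case: m {ho n0 hn hm hr nn} => [|[|]].
have [j ej] : exists j, m = j.+1 by exists m.-1; rewrite prednK.
move: hr nn; case em: (ec_mul E m P) => [[x y]|] // [yy] _.
have y0 : y = 0.
  have : y *+ 2 == 0 by rewrite mulr2n {1}yy addNr.
  by rewrite mulrn_eq0 => /eqP.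
exists x; rewrite y0; split => // e ce.
have hs : forall i, (0 < i <= j.+1)%N -> ec_mul E i P != None.
  by move=> i /andP[i0 ij]; apply/eqP; apply: hm => //; lia.
have hx : forall i, (0 < i < j.+1)%N -> xof (ec_mul E i P) != e.
  by move=> i /andP[i0 ij]; apply: (root_not_x ns ho) => //; lia.
have [t ht] := chain hP ce hs hx.
rewrite -ej em /= in ht.
have hx1 := hx 1%N ltac:(lia).
have hP1 : ec_mul E 1 P = P by case: (P) => [[? ?]|].
rewrite hP1 in hx1.
have eh : m = (m./2 + m./2)%N.
  by rewrite addnn -[in LHS](odd_double_half m) (negbTE ev).
rewrite eh exprD in ht.
exists (t / (xof P - e) ^+ m./2).
rewrite expr_div_n -ht; field.
by rewrite ?expf_neq0 ?subr_eq0.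
Qed.

Definition psi3 E (X : rat) := 3%:R * X ^+ 4 + 4%:R * wa E * X ^+ 3 + 6%:R * wb E * X ^+ 2 - wb E ^+ 2.

Lemma neq_neg (y : rat) : y != 0 -> (y == - y) = false.
Proof.
move=> y0; apply/negbTE; apply: contra y0 => /eqP yy.
have : y *+ 2 == 0 by rewrite mulr2n {1}yy addNr.
by rewrite mulrn_eq0.
Qed.

Lemma selfneg (P : ecpt) : P <> None -> P = neg P -> exists x, P = Some (x, 0).
Proof.
case: P => [[x y]|] // _ [yy]; exists x.
have : y *+ 2 == 0 by rewrite mulr2n {1}yy addNr.
by rewrite mulrn_eq0 => /eqP ->.
Qed.

Lemma sq_of (x e t : rat) (j : nat) : x != e -> (j = 2)%N ->
  forall X, (X - e) * (x - e) ^+ j = t ^+ 2 -> exists u, X - e = u ^+ 2.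
Proof.
move=> xe -> X h; exists (t / (x - e)); rewrite expr_div_n -h; field.
by rewrite subr_eq0.
Qed.

Lemma partB3 E P : wc E = 0 -> nonsing E -> has_order E 3 P ->
  exists x, psi3 E x = 0 /\ forall e, cub E e = 0 -> exists t, x - e = t ^+ 2.
Proof.
move=> wc0 ns ho.
have [hP [n0 [hn hm]]] := ho.
have hr := reflect_mul ns hP hn (isT : (1 <= 3)%N).
have nt := not2tors ns ho (isT : (0 < 1)%N) isT isT.
have := hm 1%N isT isT.
case: P ho hP hn hm hr nt => [[x y]|] // ho hP hn hm hr nt _.
have y0 : y != 0 by apply/eqP => y0; apply: nt; rewrite /= y0 oppr0.
move: hr; rewrite /= eqxx (neq_neg y0) /=.
set l := (_ / _) => -[hx _].
have h1 : y ^+ 2 = cub E x by move: hP; rewrite on_curveE => /eqP.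
exists x; split.
  have e1 : cubd E x = 2%:R * l * y by rewrite /l /cubd; field.
  have -> : psi3 E x = 4%:R * cub E x * (3%:R * x + wa E) - cubd E x ^+ 2.
    by rewrite /psi3 /cub /cubd wc0; ring.
  rewrite -h1 e1.
  have hl : l ^+ 2 = 3%:R * x + wa E.
    apply/eqP; rewrite -subr_eq0; apply/eqP.
    have -> : l ^+ 2 - (3%:R * x + wa E) = (l ^+ 2 - wa E - x - x) - x by ring.
    by rewrite hx subrr.
  by rewrite -hl; ring.
move=> e ce.
have xe := root_not_x ns ho (isT : (0 < 1)%N) isT isT ce.
have hs : forall i, (0 < i <= 2)%N -> ec_mul E i (Some (x, y)) != None.
  by move=> i /andP[i0 ij]; apply/eqP; apply: hm => //; lia.
have hx2 : forall i, (0 < i < 2)%N -> xof (ec_mul E i (Some (x, y))) != e.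
  by move=> i /andP[i0 ij]; apply: (root_not_x ns ho) => //; lia.
have [t ht] := chain hP ce hs hx2.
move: ht; rewrite /= eqxx (neq_neg y0) /= -/l hx.
by apply: sq_of.
Qed.

Lemma partB6 E P : nonsing E -> has_order E 6 P ->
  exists x y X e, [/\ y ^+ 2 = cub E x, y != 0, x != e & cub E e = 0] /\
    [/\ X = (cubd E x / (2%:R * y)) ^+ 2 - wa E - x - x,
    X = cub E x / (x - e) ^+ 2 - wa E - x - e &
    forall e', cub E e' = 0 -> exists t, X - e' = t ^+ 2].
Proof.
move=> ns ho.
have [hP [n0 [hn hm]]] := ho.
have hr1 := reflect_mul ns hP hn (isT : (1 <= 6)%N).
have hr3 := reflect_mul ns hP hn (isT : (3 <= 6)%N).
have nt := not2tors ns ho (isT : (0 < 1)%N) isT isT.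
have d12 := distinct_mul ho (isT : (0 < 1)%N) (isT : (1 < 2)%N) isT.
have d25 := distinct_mul ho (isT : (0 < 2)%N) (isT : (2 < 5)%N) isT.
have n3 : ec_mul E 3 P <> None by apply: hm.
have := hm 1%N isT isT.
case: P ho hP hn hm hr1 hr3 nt d12 d25 n3 => [[x y]|] // ho hP hn hm hr1 hr3 nt d12 d25 n3 _.
have y0 : y != 0 by apply/eqP => y0; apply: nt; rewrite /= y0 oppr0.
have h1 : y ^+ 2 = cub E x by move: hP; rewrite on_curveE => /eqP.
have [e he] := selfneg n3 hr3.
have hP2 := mul_on_curve 2 hP.
have hP3 := mul_on_curve 3 hP.
have e3 : ec_mul E 3 (Some (x, y)) = ec_add E (Some (x, y)) (ec_mul E 2 (Some (x, y))) by [].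
pose l := cubd E x / (2%:R * y).
pose X := l ^+ 2 - wa E - x - x.
pose Y := l * (x - X) - y.
have e2 : ec_mul E 2 (Some (x, y)) = Some (X, Y).
  by rewrite /= eqxx (neq_neg y0).
rewrite he e2 in e3; rewrite e2 in hP2 d12 d25; rewrite he in hP3.
have ce : cub E e = 0 by move: hP3; rewrite on_curveE => /eqP <-; rewrite expr0n.
have xe : x != e.
  apply/eqP => xe; have : y ^+ 2 = 0 by rewrite h1 xe ce.
  by move/eqP; rewrite expf_eq0 /= (negbTE y0).
have hX2 : Y ^+ 2 = cub E X by move: hP2; rewrite on_curveE => /eqP.
have Xx : X != x.
  apply/eqP => Xx.
  have : (Y - y) * (Y + y) = 0 by rewrite -subr_sqr hX2 h1 Xx subrr.
  move/eqP; rewrite mulf_eq0 => /orP[/eqP|/eqP] hY.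
    by apply: d12; rewrite /= -Xx (subr0_eq hY).
  apply: d25; rewrite hr1 /= -Xx.
  by move/eqP: hY; rewrite addr_eq0 => /eqP ->.
move: e3; rewrite /= [x == X]eq_sym (negbTE Xx) /=.
set mu := (Y - y) / (X - x).
move=> [ee ye].
have hmu : mu = y / (x - e).
  rewrite -ee in ye.
  have H : mu * (x - e) = y by apply/eqP; rewrite -subr_eq0 -ye.
  rewrite -H; field; by rewrite subr_eq0.
exists x, y, X, e; split => //; split.
- by rewrite /X /l /cubd.
- apply/eqP; rewrite -subr_eq0; apply/eqP.
  have -> : X - (cub E x / (x - e) ^+ 2 - wa E - x - e) = (e - (mu ^+ 2 - wa E - x - X)) + (mu ^+ 2 - y ^+ 2 / (x - e) ^+ 2) + (y ^+ 2 - cub E x) / (x - e) ^+ 2.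
    by field; rewrite subr_eq0.
  by rewrite -ee hmu expr_div_n h1 !subrr mul0r ?add0r ?addr0.
move=> e' ce'.
have xe' := root_not_x ns ho (isT : (0 < 1)%N) isT isT ce'.
have hs : forall i, (0 < i <= 2)%N -> ec_mul E i (Some (x, y)) != None.
  by move=> i /andP[i0 ij]; apply/eqP; apply: hm => //; lia.
have hx2 : forall i, (0 < i < 2)%N -> xof (ec_mul E i (Some (x, y))) != e'.
  by move=> i /andP[i0 ij]; apply: (root_not_x ns ho) => //; lia.
have [t ht] := chain hP ce' hs hx2.
move: ht; rewrite e2 /=.
by apply: sq_of.
Qed.


Lemma psi_gen (A B C e e1 e2 x y X : rat) : A = -(e + e1 + e2) ->
  B = e * e1 + e * e2 + e1 * e2 -> C = - (e * e1 * e2) -> y != 0 -> x != e ->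
  y ^+ 2 = x ^+ 3 + A * x ^+ 2 + B * x + C ->
  X = ((3%:R * x ^+ 2 + 2%:R * A * x + B) / (2%:R * y)) ^+ 2 - A - x - x ->
  X = (x ^+ 3 + A * x ^+ 2 + B * x + C) / (x - e) ^+ 2 - A - x - e ->
  3%:R * X ^+ 4 + 4%:R * A * X ^+ 3 + 6%:R * B * X ^+ 2 + 12%:R * C * X + 4%:R * A * C - B ^+ 2 = 0.
Proof.
move=> -> -> -> y0 xe h1 H2 H1.
have xe' : x - e != 0 by rewrite subr_eq0.
pose Be := (e - e1) * (e - e2).
have hW : X = e + Be / (x - e) by rewrite H1 /Be; field.
pose Rel := ((x - e) ^+ 2 - Be) ^+ 2 - 4%:R * Be * ((x - e) ^+ 2 + (e + e - e1 - e2) * (x - e) + Be).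
have hrel : Rel = 0.
  have -> : Rel =
    4%:R * y ^+ 2 * ((((3%:R * x ^+ 2 + 2%:R * (-(e + e1 + e2)) * x + (e * e1 + e * e2 + e1 * e2)) / (2%:R * y)) ^+ 2
       - (-(e + e1 + e2)) - x - x) - (e + Be / (x - e)))
    + 4%:R * (y ^+ 2 - (x ^+ 3 + (-(e + e1 + e2)) * x ^+ 2 + (e * e1 + e * e2 + e1 * e2) * x + - (e * e1 * e2))) *
      ((-(e + e1 + e2)) + x + x + e + Be / (x - e)).
    by rewrite /Rel /Be; field; rewrite xe' y0.
  by rewrite -H2 -hW h1 !subrr mulr0 mul0r addr0.
rewrite hW.
have -> : 3%:R * (e + Be / (x - e)) ^+ 4 + 4%:R * (-(e + e1 + e2)) * (e + Be / (x - e)) ^+ 3 +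
   6%:R * (e * e1 + e * e2 + e1 * e2) * (e + Be / (x - e)) ^+ 2 + 12%:R * (- (e * e1 * e2)) * (e + Be / (x - e))
   + 4%:R * (-(e + e1 + e2)) * (- (e * e1 * e2)) - (e * e1 + e * e2 + e1 * e2) ^+ 2 =
   - Be ^+ 2 * Rel / (x - e) ^+ 4.
  by rewrite /Rel /Be; field.
by rewrite hrel mulr0 mul0r.
Qed.

Lemma theta_pos (r : int) (s : nat) : (`|r| < s)%N ->
  0 < (s%:R : rat) - r%:~R /\ 0 < (s%:R : rat) + r%:~R.
Proof.
move=> h.
have h' : (`|r| < s%:Z)%R by rewrite -abszE ltz_nat.
have h1 : (r < s%:Z)%R by apply: le_lt_trans h'; exact: ler_norm.
have h2 : (- r < s%:Z)%R by apply: le_lt_trans h'; rewrite -normrN; exact: ler_norm.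
have e : (s%:R : rat) = (s%:Z)%:~R by rewrite -pmulrn.
rewrite e; split.
  by rewrite subr_gt0 ltr_int.
by rewrite -(opprK (r%:~R)) subr_gt0 -mulrNz ltr_int.
Qed.


Lemma theta_geom (r : int) (s k : nat) : (`|r| < s)%N -> (0 < k)%N ->
  let E := theta_curve r s k in
  let a := ((s%:R : rat) - r%:~R) * k%:R in
  let b := ((s%:R : rat) + r%:~R) * k%:R in
  ((has_point_of_order E 4 \/ has_point_of_order E 8) ->
     (exists t, a = t ^+ 2) /\ (exists t, a + b = t ^+ 2)) /\
  ((has_point_of_order E 3 \/ has_point_of_order E 6) ->
     exists X, psi3 E X = 0 /\ (exists t, X = t ^+ 2) /\
       (exists t, X - a = t ^+ 2) /\ (exists t, X + b = t ^+ 2)).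
Proof.
move=> hrs k0 E a b.
have [p1 p2] := theta_pos hrs.
have K0 : (0 : rat) < k%:R by rewrite ltr0n.
have ha : 0 < a by rewrite mulr_gt0.
have hb : 0 < b by rewrite mulr_gt0.
have a0 : a != 0 by rewrite gt_eqF.
have b0 : b != 0 by rewrite gt_eqF.
have ab0 : a + b != 0 by rewrite gt_eqF // addr_gt0.
have hA : wa E = b - a by [].
have hB : wb E = - a * b by [].
have hC : wc E = 0 by [].
have hcub : forall x, cub E x = x * (x - a) * (x + b) by move=> x; rewrite /cub hA hB hC; ring.
have roots : forall x, cub E x = 0 -> [\/ x = 0, x = a | x = - b].
  move=> x; rewrite hcub => /eqP; rewrite !mulf_eq0 -orbA => /or3P[/eqP|/eqP|/eqP] h.
  - by constructor 1.
  - by constructor 2; apply: subr0_eq.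
  - by constructor 3; apply/eqP; rewrite -addr_eq0 h.
have r0 : cub E 0 = 0 by rewrite hcub !mul0r.
have ra : cub E a = 0 by rewrite hcub subrr mulr0 mul0r.
have rb : cub E (- b) = 0 by rewrite hcub addNr mulr0.
have ns : nonsing E.
  move=> x /roots [->|->|->]; rewrite /cubd hA hB.
  - have -> : 3%:R * 0 ^+ 2 + 2%:R * (b - a) * 0 + - a * b = - (a * b) by ring.
    by rewrite oppr_eq0 mulf_neq0.
  - have -> : 3%:R * a ^+ 2 + 2%:R * (b - a) * a + - a * b = a * (a + b) by ring.
    by rewrite mulf_neq0.
  - have -> : 3%:R * (- b) ^+ 2 + 2%:R * (b - a) * (- b) + - a * b = b * (a + b) by ring.
    by rewrite mulf_neq0.
have sqneg : forall q : rat, 0 < q -> forall t, - q = t ^+ 2 -> False.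
  move=> q q0 t h; have : 0 <= - q by rewrite h sqr_ge0.
  by rewrite oppr_ge0 leNgt q0.
split.
  have gen : forall m P, has_order E (m + m) P -> (0 < m)%N -> ~~ odd m ->
      (exists t, a = t ^+ 2) /\ (exists t, a + b = t ^+ 2).
    move=> m P ho m0 ev.
    have [hP _] := ho.
    have [x [em hsq]] := partA ns ho m0 ev.
    have := mul_on_curve m hP; rewrite em on_curveE expr0n /= eq_sym => /eqP /roots [x0|xa|xb].
    - by exfalso; have [t ht] := hsq a ra; apply: (sqneg a ha t); rewrite -ht x0 sub0r.
    - have [t1 h1] := hsq 0 r0; have [t2 h2] := hsq (- b) rb.
      by split; [exists t1; rewrite -h1 xa subr0 | exists t2; rewrite -h2 xa opprK].
    - by exfalso; have [t ht] := hsq 0 r0; apply: (sqneg b hb t); rewrite -ht xb subr0.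
  by move=> [[P ho]|[P ho]]; [apply: (gen 2%N P) | apply: (gen 4%N P)].
move=> [[P ho]|[P ho]].
  have [x [hp hsq]] := partB3 hC ns ho.
  exists x; split => //.
  have [t1 h1] := hsq 0 r0; have [t2 h2] := hsq a ra; have [t3 h3] := hsq (- b) rb.
  split; first by exists t1; rewrite -h1 subr0.
  by split; [exists t2 | exists t3; rewrite -h3 opprK].
have [x [y [X [e [[h1 y0 xe ce] [H2 H1 hsq]]]]]] := partB6 ns ho.
exists X; split.
  have key : forall e1 e2, wa E = - (e + e1 + e2) -> wb E = e * e1 + e * e2 + e1 * e2 ->
      wc E = - (e * e1 * e2) -> psi3 E X = 0.
    move=> e1 e2 eA eB eC.
    have := psi_gen eA eB eC y0 xe h1 H2 H1.
    by rewrite /psi3 hC !(mulr0, mul0r, addr0).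
  case: (roots e ce) => ee; rewrite ee in xe H1 *.
  - by apply: (key a (- b)); rewrite ?hA ?hB ?hC ee; ring.
  - by apply: (key 0 (- b)); rewrite ?hA ?hB ?hC ee; ring.
  - by apply: (key 0 a); rewrite ?hA ?hB ?hC ee; ring.
have [t1 h1'] := hsq 0 r0; have [t2 h2'] := hsq a ra; have [t3 h3'] := hsq (- b) rb.
split; first by exists t1; rewrite -h1' subr0.
by split; [exists t2 | exists t3; rewrite -h3' opprK].
Qed.


Lemma Lval (p k w N D d : nat) : prime p -> (p %| k)%N -> ~~ (p * p %| k)%N ->
  coprime N D -> ~~ (p %| d)%N -> (k * w * D ^ 2 = N ^ 2 * d)%N -> (p %| w)%N.
Proof.
move=> pp pk ppk cND pd h.
have pN : (p %| N)%N.
  have : (p %| N ^ 2 * d)%N by rewrite -h dvdn_mulr // dvdn_mulr.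
  by rewrite Euclid_dvdM // (negbTE pd) orbF Euclid_dvdX // andbT.
have pD : ~~ (p %| D)%N.
  apply/negP => pD; move: cND; rewrite /coprime => /eqP cND.
  have : (p %| gcdn N D)%N by rewrite dvdn_gcd pN pD.
  by rewrite cND dvdn1 => /eqP p1; move: pp; rewrite p1.
have ek : k = (p * (k %/ p))%N by rewrite mulnC divnK.
have pk' : ~~ (p %| k %/ p)%N.
  by apply: contra ppk => h'; rewrite ek dvdn_pmul2l ?prime_gt0.
have : (p * p %| N ^ 2 * d)%N by rewrite dvdn_mulr // expnS expn1 dvdn_mul.
rewrite -h ek -!mulnA dvdn_pmul2l ?prime_gt0 //.
rewrite Euclid_dvdM // (negbTE pk') /= Euclid_dvdM // Euclid_dvdX // (negbTE pD) /= orbF.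
by [].
Qed.

Lemma rat_sq_int (k : nat) (w d : int) (t : rat) :
  (0 < d)%R -> k%:R * (w%:~R / d%:~R) = t ^+ 2 ->
  (k * `|w| * (`|denq t|) ^ 2 = (`|numq t|) ^ 2 * `|d|)%N.
Proof.
move=> d0 h.
have ht : t = (numq t)%:~R / (denq t)%:~R by rewrite divq_num_den.
have D0' : denq t != 0 by rewrite gt_eqF // denq_gt0.
have d0'' : d != 0 by rewrite gt_eqF.
move: ht D0'; set N := numq t; set D := denq t => ht D0'.
rewrite [k%:R]pmulrn in h.
have H : (k%:Z * w * D ^+ 2 = N ^+ 2 * d)%R.
  apply: (intr_inj (R := rat)).
  rewrite !(rmorphM, rmorphXn) /=.
  have -> : (k%:Z)%:~R * w%:~R * D%:~R ^+ 2 =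
     ((k%:Z)%:~R * (w%:~R / d%:~R)) * d%:~R * D%:~R ^+ 2 :> rat.
    by field; rewrite intr_eq0.
  by rewrite h ht; field; rewrite intr_eq0.
have := congr1 absz H.
by rewrite !abszM absz_nat !expnS expn0 !muln1.
Qed.

Lemma sq_p (k : nat) (w d : int) (t : rat) p : (0 < d)%R -> prime p -> (p %| k)%N ->
  ~~ (p * p %| k)%N -> ~~ (p %| `|d|)%N -> k%:R * (w%:~R / d%:~R) = t ^+ 2 -> (p %| `|w|)%N.
Proof.
move=> d0 pp pk ppk pd h.
exact: (Lval pp pk ppk (coprime_num_den t) pd (rat_sq_int d0 h)).
Qed.

Lemma dvd3 p : prime p -> (p %| 3)%N -> p = 3%N.
Proof. by move=> pp h; have := dvdn_leq (isT : (0 < 3)%N) h; case: p pp h => [|[|[|[|p]]]]. Qed.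

Lemma dvd2 p : prime p -> (p %| 2)%N -> p = 2%N.
Proof. by move=> pp h; have := dvdn_leq (isT : (0 < 2)%N) h; case: p pp h => [|[|[|p]]]. Qed.

Lemma dvdzn (p : nat) (z : int) : (p%:Z %| z)%Z = (p %| `|z|)%N.
Proof. by rewrite dvdzE absz_nat. Qed.

Lemma final_contra (r : int) (s : nat) p : coprime `|r| s -> prime p -> p != 2%N ->
  (p%:Z %| s%:Z - r)%Z -> (p%:Z %| s%:Z + r)%Z -> False.
Proof.
move=> cop pp p2 h1 h2.
have hs : (p%:Z %| 2 * s%:Z)%Z.
  have -> : (2 * s%:Z = (s%:Z - r) + (s%:Z + r))%R by ring.
  by rewrite rpredD.
have hr : (p%:Z %| 2 * r)%Z.
  have -> : (2 * r = (s%:Z + r) - (s%:Z - r))%R by ring.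
  by rewrite rpredB.
rewrite !dvdzn !abszM !Euclid_dvdM // in hs hr.
have np2 : ~~ (p %| `|2%:Z|)%N by apply/negP => /(dvd2 pp) /eqP; rewrite (negbTE p2).
rewrite (negbTE np2) /= in hs hr.
move: cop; rewrite /coprime => /eqP c.
have : (p %| gcdn `|r| s)%N by rewrite dvdn_gcd hs hr.
by rewrite c dvdn1 => /eqP p1; move: pp; rewrite p1.
Qed.

Lemma NT4 (r : int) (s k : nat) : coprime `|r| s -> (0 < k)%N ->
  (exists t, ((s%:R : rat) - r%:~R) * k%:R = t ^+ 2) ->
  (exists t, ((s%:R : rat) - r%:~R) * k%:R + ((s%:R : rat) + r%:~R) * k%:R = t ^+ 2) ->
  forall p, prime p -> (p %| k)%N -> ~~ (p * p %| k)%N -> p = 2%N.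
Proof.
move=> cop k0 [t1 h1] [t2 h2] p pp pk ppk.
case: (eqVneq p 2) => [->//|p2]; exfalso.
have d1 : ~~ (p %| `|1%:Z|)%N by rewrite absz1 dvdn1; apply/eqP => p1; move: pp; rewrite p1.
have q1 : (p %| `|s%:Z - r|)%N.
  apply: (sq_p (d := 1) (t := t1) _ pp pk ppk d1) => //.
  by rewrite -h1 rmorphB /= -pmulrn divr1 mulrC.
have q2 : (p %| `|(2 * s%:Z)%R|)%N.
  apply: (sq_p (d := 1) (t := t2) _ pp pk ppk d1) => //.
  rewrite -h2 rmorphM /= -!pmulrn divr1; ring.
rewrite abszM Euclid_dvdM // /= in q2.
have np2 : ~~ (p %| 2)%N by apply/negP => /(dvd2 pp) /eqP; rewrite (negbTE p2).
rewrite (negbTE np2) /= in q2.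
apply: (final_contra cop pp p2); rewrite dvdzn //.
have -> : (s%:Z + r = 2 * s%:Z - (s%:Z - r))%R by ring.
rewrite -dvdzn rpredB // ?dvdzn ?abszM ?Euclid_dvdM //= q2 ?orbT //.
Qed.

Lemma NT3 (r : int) (s k : nat) (X : rat) : coprime `|r| s -> (0 < k)%N ->
  psi3 (theta_curve r s k) X = 0 ->
  (exists t, X = t ^+ 2) ->
  (exists t, X - ((s%:R : rat) - r%:~R) * k%:R = t ^+ 2) ->
  (exists t, X + ((s%:R : rat) + r%:~R) * k%:R = t ^+ 2) ->
  forall p, prime p -> (p %| k)%N -> ~~ (p * p %| k)%N -> p = 2%N \/ p = 3%N.
Proof.
move=> cop k0 hpsi [t1 h1] [t2 h2] [t3 h3] p pp pk ppk.
case: (eqVneq p 2) => [->|p2]; first by left.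
case: (eqVneq p 3) => [->|p3]; first by right.
exfalso.
have K0 : (k%:R : rat) != 0 by rewrite pnatr_eq0 -lt0n.
have kZ : (k%:Z != 0) by rewrite eqz_nat -lt0n.
pose u := X / k%:R.
have hX : X = k%:R * u by rewrite /u; field.
clearbody u.
move: (divq_num_den u) (coprime_num_den u) (denq_gt0 u).
move: (numq u) (denq u) => n d hu cnd d0.
have dZ : d != 0 by rewrite gt_eqF.
pose m : int := (s%:Z ^+ 2 - r ^+ 2)%R.
have G : (3 * n ^+ 4 + 8 * r * n ^+ 3 * d - 6 * m * n ^+ 2 * d ^+ 2 - m ^+ 2 * d ^+ 4 = 0 :> int)%R.
  apply: (intr_inj (R := rat)); rewrite rmorph0.
  have -> : ((3 * n ^+ 4 + 8 * r * n ^+ 3 * d - 6 * m * n ^+ 2 * d ^+ 2 - m ^+ 2 * d ^+ 4)%R%:~R : rat)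
     = psi3 (theta_curve r s k) X * d%:~R ^+ 4 / k%:R ^+ 4.
    rewrite hX -hu /psi3 /m /= !(rmorphD, rmorphB, rmorphN, rmorphM, rmorphXn) /= [s%:R]pmulrn [k%:R]pmulrn.
    by field; rewrite K0 intr_eq0 dZ.
  by rewrite hpsi !mul0r.
have dv : (`|d| %| 3)%N.
  have : (d %| 3 * n ^+ 4)%Z.
    apply/dvdzP; exists (- (8 * r * n ^+ 3) + 6 * m * n ^+ 2 * d + m ^+ 2 * d ^+ 3)%R.
    have e : (3 * n ^+ 4 = (- (8 * r * n ^+ 3) + 6 * m * n ^+ 2 * d + m ^+ 2 * d ^+ 3) * d +
       (3 * n ^+ 4 + 8 * r * n ^+ 3 * d - 6 * m * n ^+ 2 * d ^+ 2 - m ^+ 2 * d ^+ 4))%R by ring.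
    by rewrite e G addr0.
  rewrite dvdzE abszM abszX Gauss_dvdl //.
  by apply: coprimeXr; rewrite coprime_sym.
have pd : ~~ (p %| `|d|)%N.
  by apply/negP => h; move: p3; rewrite (dvd3 pp (dvdn_trans h dv)) eqxx.
have q1 : (p %| `|n|)%N.
  apply: (sq_p (t := t1) d0 pp pk ppk pd).
  by rewrite hu -hX h1.
have q2 : (p %| `|(n - (s%:Z - r) * d)%R|)%N.
  apply: (sq_p (t := t2) d0 pp pk ppk pd).
  rewrite -h2 hX -hu !(rmorphD, rmorphB, rmorphN, rmorphM) /= [s%:R]pmulrn; field.
  by rewrite ?intr_eq0.
have q3 : (p %| `|(n + (s%:Z + r) * d)%R|)%N.
  apply: (sq_p (t := t3) d0 pp pk ppk pd).
  rewrite -h3 hX -hu !(rmorphD, rmorphB, rmorphN, rmorphM) /= [s%:R]pmulrn; field.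
  by rewrite ?intr_eq0.
have z1 : (p%:Z %| (s%:Z - r) * d)%Z.
  have -> : ((s%:Z - r) * d = n - (n - (s%:Z - r) * d))%R by ring.
  by rewrite rpredB // dvdzn.
have z2 : (p%:Z %| (s%:Z + r) * d)%Z.
  have -> : ((s%:Z + r) * d = (n + (s%:Z + r) * d) - n)%R by ring.
  by rewrite rpredB // dvdzn.
rewrite !dvdzn !abszM !Euclid_dvdM // (negbTE pd) !orbF -!dvdzn in z1 z2.
exact: (final_contra cop pp p2 z1 z2).
Qed.

Lemma k_small (k : nat) : squarefree k ->
  (forall p, prime p -> (p %| k)%N -> p = 2%N \/ p = 3%N) -> (k %| 6)%N.
Proof.
move=> [k0 sq] hp.
have gk : (gcdn k 6 %| k)%N by apply: dvdn_gcdl.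
have g0 : (0 < gcdn k 6)%N by rewrite gcdn_gt0 k0.
have ek : k = (k %/ gcdn k 6 * gcdn k 6)%N by rewrite divnK.
case: (ltngtP (k %/ gcdn k 6) 1) => hq.
- by move: hq; rewrite ltnS leqn0 => /eqP q0; move: k0; rewrite ek q0 mul0n.
- exfalso.
  have pq := pdiv_prime hq; have dq := pdiv_dvd (k %/ gcdn k 6).
  set p := pdiv _ in pq dq.
  have pk : (p %| k)%N by rewrite ek dvdn_mulr.
  have p6 : (p %| 6)%N by case: (hp p pq pk) => ->.
  have pg : (p %| gcdn k 6)%N by rewrite dvdn_gcd pk p6.
  by have := sq p pq; rewrite ek dvdn_mul.
- by rewrite ek hq mul1n dvdn_gcdr.
Qed.

Lemma enum6 k : (0 < k)%N -> (k %| 6)%N -> [\/ k = 1, k = 2, k = 3 | k = 6]%N.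
Proof.
move=> k0 h; have := dvdn_leq (isT : (0 < 6)%N) h.
case: k k0 h => [|[|[|[|[|[|[|k]]]]]]] //= _ _ _.
- by constructor 1.
- by constructor 2.
- by constructor 3.
- by constructor 4.
Qed.

Local Close Scope ring_scope.
Unset Implicit Arguments.
Set Strict Implicit.

Theorem theorem4p2 (r : int) (s k : nat) :
  coprime `|r|%N s -> (`|r| < s)%N -> squarefree k ->
  let E := theta_curve r s k in
  (odd k -> (has_point_of_order E 4 \/ has_point_of_order E 8) -> k = 1%N) /\
  (~~ odd k -> (has_point_of_order E 4 \/ has_point_of_order E 8) -> k = 2%N) /\
  (odd k -> (has_point_of_order E 3 \/ has_point_of_order E 6) ->
     k = 1%N \/ k = 3%N) /\
  (~~ odd k -> (has_point_of_order E 3 \/ has_point_of_order E 6) ->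
     k = 2%N \/ k = 6%N).
Proof.
move=> cop hlt hsq E.
have [k0 sqf] := hsq.
have [G4 G3] := theta_geom hlt k0.
have P4 : (has_point_of_order E 4 \/ has_point_of_order E 8) ->
    [/\ (k %| 6)%N & ~~ (3 %| k)%N].
  move=> h; have [h1 h2] := G4 h.
  have hp := NT4 cop k0 h1 h2.
  split.
    apply: k_small => // p pp pk; left; exact: hp p pp pk (sqf p pp).
  by apply/negP => h3; have := hp 3%N isT h3 (sqf 3%N isT).
have P3 : (has_point_of_order E 3 \/ has_point_of_order E 6) -> (k %| 6)%N.
  move=> h; have [X [hpsi [s1 [s2 s3]]]] := G3 h.
  have hp := NT3 cop k0 hpsi s1 s2 s3.
  by apply: k_small => // p pp pk; apply: hp p pp pk (sqf p pp).
split; [|split; [|split]].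
- move=> ok h; have [d6 n3] := P4 h.
  by case: (enum6 k0 d6) => ek; move: ok n3; rewrite ek.
- move=> ok h; have [d6 n3] := P4 h.
  by case: (enum6 k0 d6) => ek; move: ok n3; rewrite ek.
- move=> ok h; have d6 := P3 h.
  by case: (enum6 k0 d6) => ek; move: ok; rewrite ek //; auto.
- move=> ok h; have d6 := P3 h.
  by case: (enum6 k0 d6) => ek; move: ok; rewrite ek //; auto.
Qed.
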